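(* Let $G$ and $H$ be finite simple graphs such that $\delta(G)\le\delta(H)$. Let $S$ be a minimum edge-cut in $G\times H$ and let $B,W$ be the connected components of $(G\times H)-S$. If $|S|<\delta(G\times H)$, then for every $(x,y)\in V(G\times H)$ either $N_G(x)\times\{y\}\subseteq B$ or $N_G(x)\times\{y\}\subseteq W$.
   Context: The direct product $G\times H$ has vertex set $V(G)\times V(H)$, with $(x_1,y_1)$ adjacent to $(x_2,y_2)$ if and only if $x_1x_2\in E(G)$ and $y_1y_2\in E(H)$. $\delta(F)$ denotes the minimum degree of a graph $F$, and $N_G(x)$ the open neighbourhood of $x$ in $G$. A minimum edge-cut is an edge set of minimum size whose removal disconnects the graph; $B$ and $W$ denote the two connected components of $(G\times H)-S$. *)

(* Defs.v *)
From mathcomp Require Import all_boot.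
Set Implicit Arguments. Unset Strict Implicit. Unset Printing Implicit Defensive.

Definition simple_graph (T : finType) (e : rel T) : Prop :=
  symmetric e /\ irreflexive e.

Definition nbhd (T : finType) (e : rel T) (x : T) : {set T} := [set y | e x y].

(* minimum degree delta(F); the default #|T| only matters when T is empty
   (then delta = 0 = #|T|), since every degree is < #|T| *)
Definition mindeg (T : finType) (e : rel T) : nat :=
  \big[minn/#|T|]_(v : T) #|nbhd e v|.

Definition dprod_rel (T1 T2 : finType) (e1 : rel T1) (e2 : rel T2) : rel (T1 * T2) :=
  fun p q => e1 p.1 q.1 && e2 p.2 q.2.

Definition edges (T : finType) (e : rel T) : {set {set T}} :=
  [set [set p.1; p.2] | p in [set p : T * T | e p.1 p.2]].

Definition del_edges (T : finType) (e : rel T) (S : {set {set T}}) : rel T :=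
  fun u v => e u v && ([set u; v] \notin S).

Definition disconnected (T : finType) (e : rel T) : Prop :=
  exists u v : T, ~~ connect e u v.

Definition edge_cut (T : finType) (e : rel T) (S : {set {set T}}) : Prop :=
  S \subset edges e /\ disconnected (del_edges e S).

Definition min_edge_cut (T : finType) (e : rel T) (S : {set {set T}}) : Prop :=
  edge_cut e S /\ forall S', edge_cut e S' -> #|S| <= #|S'|.

Definition component (T : finType) (e : rel T) (C : {set T}) : Prop :=
  exists2 x, x \in C & C = [set y | connect e x y].

(* Main.v *)
Require Import Defs.
From mathcomp Require Import all_boot.
Set Implicit Arguments. Unset Strict Implicit. Unset Printing Implicit Defensive.

Lemma has_change (V : eqType) (c : V -> bool) (t : seq V) (h : V) :
  c h != c (last h t) -> has (fun e => c e.1 != c e.2) (zip (h :: t) t).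
Proof.
elim: t h => [|a t IH] h /=; first by rewrite eqxx.
move=> Hl; case: (boolP (c h != c a)) => [Hn|]; first by apply/orP; left.
rewrite negbK => /eqP E; rewrite E in Hl.
by apply/orP; right; apply: IH.
Qed.

Lemma set2_eq (V : finType) (a b a' b' : V) :
  [set a; b] = [set a'; b'] -> (a = a' /\ b = b') \/ (a = b' /\ b = a').
Proof.
move=> E.
have ha : a \in [set a'; b'] by rewrite -E set21.
have hb : b \in [set a'; b'] by rewrite -E set22.
have ha' : a' \in [set a; b] by rewrite E set21.
have hb' : b' \in [set a; b] by rewrite E set22.
move: ha hb ha' hb'; rewrite !inE.
case/orP=> /eqP ea; case/orP=> /eqP eb; case/orP=> /eqP ea'; case/orP=> /eqP eb';
  subst; auto.
Qed.

Section Core.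
Variables (T1 T2 : finType) (G : rel T1) (H : rel T2).
Hypotheses (symG : symmetric G) (irrG : irreflexive G).
Hypotheses (symH : symmetric H) (irrH : irreflexive H).
Variable c : T1 * T2 -> bool.
Variables (x x1 x2 : T1) (y : T2).
Hypotheses (Gx1 : G x x1) (Gx2 : G x x2) (cx12 : c (x1, y) != c (x2, y)).
Variable d : nat.
Hypotheses (d1 : d <= #|nbhd G x1|) (d2 : d <= #|nbhd G x2|)
  (dH : forall q, H y q -> d <= #|nbhd H q|).

Local Notation PR := (dprod_rel G H).

Definition uq q := if c (x, q) != c (x1, y) then x1 else x2.
Definition uq' q := if c (x, q) != c (x1, y) then x2 else x1.

Lemma uq_col q : c (uq q, y) != c (x, q).
Proof.
rewrite /uq; case: ifP => [|/negbFE/eqP ->]; first by rewrite eq_sym.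
by rewrite eq_sym.
Qed.

Lemma uq_col' q : c (uq q, y) != c (uq' q, y).
Proof. by rewrite /uq /uq'; case: ifP => _ //; rewrite eq_sym. Qed.

Lemma Guq q : G x (uq q). Proof. by rewrite /uq; case: ifP. Qed.
Lemma Guq' q : G x (uq' q). Proof. by rewrite /uq'; case: ifP. Qed.

Lemma neq_of_G (a b : T1) : G a b -> (b == a) = false.
Proof. by move=> Hab; apply/eqP => E; rewrite E irrG in Hab. Qed.
Lemma neq_of_H (a b : T2) : H a b -> (b == a) = false.
Proof. by move=> Hab; apply/eqP => E; rewrite E irrH in Hab. Qed.

Lemma uq_x q : (uq q == x) = false. Proof. exact: neq_of_G (Guq q). Qed.
Lemma uq'_x q : (uq' q == x) = false. Proof. exact: neq_of_G (Guq' q). Qed.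

Lemma in12 q v : (v \in [:: x1; x2]) = (v == uq q) || (v == uq' q).
Proof. by rewrite !inE /uq /uq'; case: ifP => // _; rewrite orbC. Qed.

Definition Pl u := enum (nbhd G u :\ x).
Definition Al q := enum (nbhd H q :\ y).
Definition pk q k := nth x (Pl (uq q)) k.-1.
Definition ak q k := nth y (Al q) k.-1.

Lemma size_Pl q : d.-1 <= size (Pl (uq q)).
Proof.
rewrite /Pl -cardE.
have xin : x \in nbhd G (uq q) by rewrite inE symG Guq.
have := cardsD1 x (nbhd G (uq q)); rewrite xin /= => E.
have : d <= #|nbhd G (uq q)| by rewrite /uq; case: ifP.
by rewrite E -subn1 leq_subLR.
Qed.

Lemma size_Al q : H y q -> d.-1 <= size (Al q).
Proof.
move=> Hyq; rewrite /Al -cardE.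
have yin : y \in nbhd H q by rewrite inE symH.
have := cardsD1 y (nbhd H q); rewrite yin /= => E.
by have := dH Hyq; rewrite E -subn1 leq_subLR.
Qed.

Lemma klt k : 0 < k < d -> k.-1 < d.-1.
Proof. move=> /andP [h1 h2]; case: k h1 h2 => // k _; case: d => // d' /=; rewrite ltnS. Qed.

Lemma pk_mem q k : 0 < k < d -> pk q k \in nbhd G (uq q) :\ x.
Proof.
move=> hk; rewrite -mem_enum; apply: mem_nth.
exact: leq_trans (klt hk) (size_Pl q).
Qed.

Lemma ak_mem q k : H y q -> 0 < k < d -> ak q k \in nbhd H q :\ y.
Proof.
move=> Hyq hk; rewrite -mem_enum; apply: mem_nth.
exact: leq_trans (klt hk) (size_Al Hyq).
Qed.

Lemma index_pk q k : 0 < k < d -> index (pk q k) (Pl (uq q)) = k.-1.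
Proof.
move=> hk; apply: index_uniq; first exact: leq_trans (klt hk) (size_Pl q).
exact: enum_uniq.
Qed.

Lemma index_ak q k : H y q -> 0 < k < d -> index (ak q k) (Al q) = k.-1.
Proof.
move=> Hyq hk; apply: index_uniq; first exact: leq_trans (klt hk) (size_Al Hyq).
exact: enum_uniq.
Qed.

Definition whd q := (uq q, y).
Definition wtl q k : seq (T1 * T2) :=
  if k == 0 then [:: (x, q)]
  else if pk q k == uq' q then [:: (uq' q, q); (x, y); (uq q, q); (uq' q, y)]
  else [:: (pk q k, q); (uq q, ak q k); (x, q)].
Definition wed q k := zip (whd q :: wtl q k) (wtl q k).

Lemma wed_adj q k : H y q -> k < d -> all (fun e => PR e.1 e.2) (wed q k).
Proof.
move=> Hyq kd; rewrite /wed /wtl /whd /dprod_rel.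
case: ifP => [_|/negbT k0] /=; first by rewrite symG Guq Hyq.
have hk : 0 < k < d by rewrite lt0n k0.
have := pk_mem q hk; rewrite !inE => /andP [_ Gp].
case: ifP => [/eqP ep|_] /=.
  by rewrite -ep Gp Hyq /= [G (pk q k) x]symG ep Guq' symH Hyq Guq.
have := ak_mem Hyq hk; rewrite !inE => /andP [_ Ha].
by rewrite Gp Hyq symG Gp Ha symG Guq symH Ha.
Qed.

Lemma wed_has q k : H y q -> k < d -> has (fun e => c e.1 != c e.2) (wed q k).
Proof.
move=> Hyq kd; apply: has_change; rewrite /wtl.
case: ifP => _ /=; first exact: uq_col.
by case: ifP => _ /=; [exact: uq_col' | exact: uq_col].
Qed.

Definition kstar q := (index (uq' q) (Pl (uq q))).+1.
Definition decx (hi hx : T2) : T2 * nat :=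
  if hx == y then (hi, kstar hi) else if hi == y then (hx, 0)
  else (hx, (index hi (Al hx)).+1).
Definition dec (a b : T1 * T2) : T2 * nat :=
  if a.1 == x then decx b.2 a.2
  else if b.1 == x then decx a.2 b.2
  else if (a.1 \in [:: x1; x2]) && (b.1 \in [:: x1; x2]) then
    (if a.2 == y then b.2 else a.2, kstar (if a.2 == y then b.2 else a.2))
  else if a.1 \in [:: x1; x2] then (b.2, (index b.1 (Pl a.1)).+1)
  else (a.2, (index a.1 (Pl b.1)).+1).

Lemma dec_wed q k : H y q -> k < d -> forall e, e \in wed q k ->
  dec e.1 e.2 = (q, k) /\ dec e.2 e.1 = (q, k).
Proof.
move=> Hyq kd e; rewrite /wed /wtl /whd.
have qy : (q == y) = false by rewrite (neq_of_H Hyq).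
have yy : (y == y) = true by rewrite eqxx.
have in1 := in12 q (uq q); have in2 := in12 q (uq' q).
rewrite eqxx /= in in1; rewrite eqxx orbT in in2.
case: ifP => [/eqP k0|/negbT k0] /=.
  by rewrite inE => /eqP -> /=; rewrite /dec /decx /= uq_x eqxx qy yy k0.
have hk : 0 < k < d by rewrite lt0n k0.
have := pk_mem q hk; rewrite !inE => /andP [px Gp].
case: ifP => [/eqP ep|/negbT np] /=.
  have ks : kstar q = k by rewrite /kstar -ep index_pk // prednK // lt0n.
  rewrite !inE => /or4P [] /eqP -> /=; rewrite /dec /decx /= ?uq_x ?uq'_x ?eqxx
     ?qy ?in1 ?in2 ?ks //.
have pin : (pk q k \in [:: x1; x2]) = false.
  by rewrite (in12 q) (negbTE np) orbF (neq_of_G Gp).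
have := ak_mem Hyq hk; rewrite !inE => /andP [ay Ha].
have ip : (index (pk q k) (Pl (uq q))).+1 = k by rewrite index_pk // prednK // lt0n.
have ia : (index (ak q k) (Al q)).+1 = k by rewrite index_ak // prednK // lt0n.
move=> /or3P [] /eqP -> /=; rewrite /dec /decx /= ?uq_x ?(negbTE px)
   ?qy ?in1 ?pin ?(negbTE ay) ?ip ?ia ?eqxx //.
Qed.

Definition bich (e : (T1 * T2) * (T1 * T2)) := c e.1 != c e.2.
Definition fe (i : T2 * 'I_d) :=
  let E := wed i.1 i.2 in nth ((x, y), (x, y)) E (find bich E).
Definition fs (i : T2 * 'I_d) : {set T1 * T2} := [set (fe i).1; (fe i).2].

Definition Iset : {set T2 * 'I_d} := setX (nbhd H y) [set: 'I_d].

Lemma fe_in i : i \in Iset -> fe i \in wed i.1 i.2 /\ bich (fe i).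
Proof.
case: i => q k; rewrite !inE andbT /= => Hyq.
have hh := wed_has Hyq (ltn_ord k).
split; first by rewrite /fe /=; apply: mem_nth; rewrite -has_find.
exact: nth_find.
Qed.

Lemma fs_inj : {in Iset &, injective fs}.
Proof.
move=> [q k] [q' k'] hi hj E.
have [m1 _] := fe_in hi; have [m2 _] := fe_in hj.
move: (hi) (hj); rewrite !inE !andbT /= => Hyq Hyq'.
have [dA dB] := dec_wed Hyq (ltn_ord k) m1.
have [dA' dB'] := dec_wed Hyq' (ltn_ord k') m2.
have key : (q, val k) = (q', val k').
  case: (set2_eq E) => [[e1 e2]|[e1 e2]].
    by rewrite -dA -dA' e1 e2.
  by rewrite -dA -dB' e1 e2.
case: key => -> /val_inj ->.
done.
Qed.

Lemma core_count :
  d * #|nbhd H y| <=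
  #|[set [set e.1; e.2] | e in [set e : (T1 * T2) * (T1 * T2) | PR e.1 e.2 && bich e]]|.
Proof.
have -> : d * #|nbhd H y| = #|Iset| by rewrite cardsX cardsT card_ord mulnC.
rewrite -(card_in_imset fs_inj); apply: subset_leq_card.
apply/subsetP => z /imsetP [i hi ->].
have [m b] := fe_in hi.
move: (hi); rewrite !inE andbT => Hyq.
have := wed_adj Hyq (ltn_ord i.2) => /allP /(_ _ m) adj.
apply/imsetP; exists (fe i); last by [].
by rewrite inE adj b.
Qed.

End Core.

Lemma bigmin_le_seq (T : eqType) (s : seq T) m (F : T -> nat) v :
  v \in s -> \big[minn/m]_(i <- s) F i <= F v.
Proof.
elim: s => //= a s IH; rewrite inE big_cons => /orP [/eqP <-|/IH h].
  exact: geq_minl.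
exact: leq_trans (geq_minr _ _) h.
Qed.

Lemma mindeg_le (T : finType) (e : rel T) v : mindeg e <= #|nbhd e v|.
Proof. rewrite /mindeg; apply: bigmin_le_seq; exact: mem_index_enum. Qed.

Lemma mindeg_ex (T : finType) (e : rel T) (t : T) : exists v, #|nbhd e v| = mindeg e.
Proof.
case: (@arg_minnP T t xpredT (fun v => #|nbhd e v|) isT) => v _ hmin.
exists v; apply/eqP; rewrite eqn_leq mindeg_le andbT.
rewrite /mindeg; elim/big_rec: _ => [|i r _ hr]; first exact: max_card.
by rewrite leq_min hmin.
Qed.


Theorem lemma2p3 (T1 T2 : finType) (G : rel T1) (H : rel T2)
  (S : {set {set (T1 * T2)}}) (B W : {set (T1 * T2)}) :
  simple_graph G -> simple_graph H ->
  mindeg G <= mindeg H ->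
  min_edge_cut (dprod_rel G H) S ->
  component (del_edges (dprod_rel G H) S) B ->
  component (del_edges (dprod_rel G H) S) W ->
  B != W ->
  B :|: W = [set: T1 * T2] ->
  #|S| < mindeg (dprod_rel G H) ->
  forall (x : T1) (y : T2),
    [set (x', y) | x' in nbhd G x] \subset B \/
    [set (x', y) | x' in nbhd G x] \subset W.
Proof.
move=> [symG irrG] [symH irrH] hGH _ [b0 _ hB] _ _ hBW hS x y.
case: (boolP ([set (x', y) | x' in nbhd G x] \subset B)) => [h|nAB]; first by left.
case: (boolP ([set (x', y) | x' in nbhd G x] \subset W)) => [h|nAW]; first by right.
exfalso.
case/subsetPn: nAB => z /imsetP [x1 hx1 ->] nB1.
case/subsetPn: nAW => z' /imsetP [x2 hx2 ->] nW2.
have B2 : (x2, y) \in B.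
  have : (x2, y) \in B :|: W by rewrite hBW inE.
  by rewrite inE (negbTE nW2) orbF.
pose c := fun v : T1 * T2 => v \in B.
have symPR : symmetric (dprod_rel G H).
  by move=> u v; rewrite /dprod_rel symG symH.
have gen : forall u v, dprod_rel G H u v -> u \in B -> v \notin B -> [set u; v] \in S.
  move=> u v huv hu; apply: contraR => nS.
  move: hu; rewrite hB !inE => hu; apply: connect_trans hu (connect1 _).
  by rewrite /del_edges huv nS.
have cut : forall u v, dprod_rel G H u v -> c u != c v -> [set u; v] \in S.
  move=> u v huv; rewrite /c.
  case: (boolP (u \in B)) => hu; case: (boolP (v \in B)) => hv //= _.
    exact: gen.
  by rewrite setUC; apply: gen => //; rewrite symPR.
have Gx1 : G x x1 by rewrite inE in hx1.
have Gx2 : G x x2 by rewrite inE in hx2.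
have cx : c (x1, y) != c (x2, y) by rewrite /c B2 (negbTE nB1).
have dH : forall q, H y q -> mindeg G <= #|nbhd H q|.
  by move=> q _; apply: leq_trans hGH (mindeg_le _ _).
have hc := core_count symG irrG symH irrH Gx1 Gx2 cx (mindeg_le _ _) (mindeg_le _ _) dH.
have hFS : #|[set [set e.1; e.2] | e in [set e : (T1 * T2) * (T1 * T2) |
             dprod_rel G H e.1 e.2 & bich c e]]| <= #|S|.
  apply: subset_leq_card; apply/subsetP => zz /imsetP [e he ->].
  by move: he; rewrite inE => /andP [h1 h2]; apply: cut.
have [v0 hv0] := mindeg_ex G x.
have [w0 hw0] := mindeg_ex H y.
have hP : mindeg (dprod_rel G H) <= mindeg G * mindeg H.
  have E : nbhd (dprod_rel G H) (v0, w0) = setX (nbhd G v0) (nbhd H w0).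
    by apply/setP => [[a b]]; rewrite !inE.
  by have := mindeg_le (dprod_rel G H) (v0, w0); rewrite E cardsX hv0 hw0.
have h2 : mindeg G * mindeg H <= mindeg G * #|nbhd H y|.
  by rewrite leq_mul2l mindeg_le orbT.
have := leq_trans hP (leq_trans h2 (leq_trans hc hFS)).
by rewrite leqNgt hS.
Qed.
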